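(* Let $A$ be a quantum B-algebra, let $X,Y,F\in U(A)$ and let $F$ be a filter of $A$. Then $\mu_F(X)\cdot\mu_F(Y)\subseteq\mu_F(X\cdot Y)$. Moreover, $\mu_F:U(A)\to U(A)$ is a conucleus on $U(A)$, and the set $U(F)=\{U\in U(A)\mid U\subseteq F\}=\{\mu_F(X)\mid X\in U(A)\}$, equipped with the restriction of the multiplication of $U(A)$, is a subquantale of $U(A)$.
   Context: A quantum B-algebra is a poset $(A,\le)$ with binary operations $\to,\leadsto$ such that for all $x,y,z\in A$: $y\to z\le(x\to y)\to(x\to z)$; $y\leadsto z\le(x\leadsto y)\leadsto(x\leadsto z)$; $y\le z$ implies $x\to y\le x\to z$; and $x\le y\to z$ iff $y\le x\leadsto z$. $U(A)$ denotes the set of all upper subsets of $A$ (subsets $X$ such that $b\in X$ and $a\ge b$ imply $a\in X$; the empty set included), ordered by inclusion; it is a quantale (complete lattice whose joins are unions, with an associative multiplication distributing over arbitrary joins on both sides) under $X\cdot Y=\{a\in A\mid \exists y\in Y:\ y\to a\in X\}$. A filter of $A$ is a nonempty $F\in U(A)$ with $F\cdot F\subseteq F$. For $F,X\in U(A)$, $\mu_F(X)=F\cap X$. A conucleus on a quantale $Q$ is a map $g:Q\to Q$ that is order preserving, satisfies $g(a)\le a$ and $g(g(a))=g(a)$, and $g(a)\cdot g(b)\le g(a\cdot b)$ for all $a,b$. A subquantale is a subset closed under arbitrary joins and under the multiplication. *)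

(* Defs.v *)
Record qBalg := QBalg {
  car :> Type;
  le : car -> car -> Prop;
  imp : car -> car -> car;
  limp : car -> car -> car;
  le_refl : forall x, le x x;
  le_antisym : forall x y, le x y -> le y x -> x = y;
  le_trans : forall x y z, le x y -> le y z -> le x z;
  qb_ax1 : forall x y z, le (imp y z) (imp (imp x y) (imp x z));
  qb_ax2 : forall x y z, le (limp y z) (limp (limp x y) (limp x z));
  qb_ax3 : forall x y z, le y z -> le (imp x y) (imp x z);
  qb_ax4 : forall x y z, le x (imp y z) <-> le y (limp x z)
}.

Definition subset {T : Type} (X Y : T -> Prop) : Prop := forall a, X a -> Y a.
Definition seteq {T : Type} (X Y : T -> Prop) : Prop := forall a, X a <-> Y a.

(** Upper subsets (elements of U(A)); the empty set is allowed. *)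
Definition upper (A : qBalg) (X : A -> Prop) : Prop :=
  forall a b : A, X b -> le A b a -> X a.

Definition umul (A : qBalg) (X Y : A -> Prop) : A -> Prop :=
  fun a => exists y, Y y /\ X (imp A y a).

(** Arbitrary joins in U(A) are unions. *)
Definition bigunion (A : qBalg) (I : Type) (f : I -> A -> Prop) : A -> Prop :=
  fun a => exists i, f i a.

Definition filter (A : qBalg) (F : A -> Prop) : Prop :=
  upper A F /\ (exists a, F a) /\ subset (umul A F F) F.

Definition mu (A : qBalg) (F X : A -> Prop) : A -> Prop := fun a => F a /\ X a.

Definition is_conucleus (A : qBalg) (g : (A -> Prop) -> (A -> Prop)) : Prop :=
  (forall X, upper A X -> upper A (g X)) /\
  (forall X Y, upper A X -> upper A Y -> subset X Y -> subset (g X) (g Y)) /\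
  (forall X, upper A X -> subset (g X) X) /\
  (forall X, upper A X -> seteq (g (g X)) (g X)) /\
  (forall X Y, upper A X -> upper A Y -> subset (umul A (g X) (g Y)) (g (umul A X Y))).

(** Subquantale of U(A): a set of elements of U(A) closed under arbitrary
    joins (unions, including the empty one) and multiplication. *)
Definition is_subquantale (A : qBalg) (S : (A -> Prop) -> Prop) : Prop :=
  (forall X, S X -> upper A X) /\
  (forall (I : Type) (f : I -> A -> Prop), (forall i, S (f i)) -> S (bigunion A I f)) /\
  (forall X Y, S X -> S Y -> S (umul A X Y)).

Definition UF (A : qBalg) (F : A -> Prop) : (A -> Prop) -> Prop :=
  fun U => upper A U /\ subset U F.

(* Main.v *)
Require Import Defs.

Lemma umul_upper (A : qBalg) (X Y : A -> Prop) : upper A X -> upper A (umul A X Y).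
Proof.
  intros hX a b [y [Hy Hb]] Hba. exists y. split; [exact Hy|].
  eapply hX; [exact Hb| apply qb_ax3; exact Hba].
Qed.

Theorem lemma3p1 (A : qBalg) (X Y F : A -> Prop)
  (hX : upper A X) (hY : upper A Y) (hF : upper A F) (hFf : filter A F) :
  subset (umul A (mu A F X) (mu A F Y)) (mu A F (umul A X Y)) /\
  is_conucleus A (mu A F) /\
  (forall U, UF A F U <-> exists Z, upper A Z /\ seteq U (mu A F Z)) /\
  is_subquantale A (UF A F).
Proof.
  destruct hFf as [_ [_ HFF]].
  assert (key : forall X Y : A -> Prop,
    subset (umul A (mu A F X) (mu A F Y)) (mu A F (umul A X Y))).
  { intros X' Y' a [y [[Fy Yy] [Fya Xya]]]. split.
    - apply HFF. exists y. split; assumption.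
    - exists y. split; assumption. }
  split; [apply key|].
  split.
  { unfold is_conucleus. split; [|split; [|split; [|split]]].
    - intros Z hZ a b [Fb Zb] Hba. split; [eapply hF|eapply hZ]; eassumption.
    - intros Z W _ _ HZW a [Fa Za]. split; auto.
    - intros Z _ a [_ Za]; exact Za.
    - intros Z _ a; unfold mu; split; [intros [_ H]; exact H| intros [H1 H2]; auto].
    - intros Z W _ _. apply key. }
  split.
  { intros U; split.
    - intros [hU sU]. exists U. split; [exact hU|].
      intros a; unfold mu; split; [intros H; split; auto| intros [_ H]; exact H].
    - intros [Z [hZ eU]]. split.
      + intros a b Ub Hba. apply eU. apply eU in Ub. destruct Ub as [Fb Zb].
        split; [eapply hF|eapply hZ]; eassumption.
      + intros a Ua. apply eU in Ua. destruct Ua as [Fa _]; exact Fa. }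
  split; [|split].
  - intros Z [hZ _]; exact hZ.
  - intros I f Hf. split.
    + intros a b [i Hi] Hba. exists i. destruct (Hf i) as [hfi _]. eapply hfi; eassumption.
    + intros a [i Hi]. destruct (Hf i) as [_ sfi]. auto.
  - intros Z W [hZ sZ] [hW sW]. split.
    + apply umul_upper; exact hZ.
    + intros a [y [Wy Zya]]. apply HFF. exists y. split; auto.
Qed.
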